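(* Let $P$ be a finite metabelian $p$-group of rank $r$, and let $t\ge1$. Assume that every abelian-by-cyclic subgroup of $P$ has an abelian subgroup of index at most $t$. Then $P$ has an abelian normal subgroup of index at most $t^{2r}$.
   Context: The rank of a finite group is the minimal $r$ such that every subgroup is $r$-generated. A group is metabelian if its commutator subgroup is abelian, and abelian-by-cyclic if it has an abelian normal subgroup with cyclic quotient. *)

(* Defs.v *)
From mathcomp Require Import all_boot all_fingroup all_solvable.
Set Implicit Arguments. Unset Strict Implicit. Unset Printing Implicit Defensive.
Local Open Scope group_scope.

Definition r_generated (gT : finGroupType) (H : {set gT}) (r : nat) : Prop :=
  exists X : {set gT}, #|X| <= r /\ <<X>> = H.

Definition has_rank (gT : finGroupType) (G : {set gT}) (r : nat) : Prop :=
  (forall H : {group gT}, H \subset G -> r_generated H r) /\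
  (forall r' : nat, (forall H : {group gT}, H \subset G -> r_generated H r') -> r <= r').

Definition metabelian (gT : finGroupType) (G : {set gT}) : Prop :=
  abelian (G^`(1)).

Definition abelian_by_cyclic (gT : finGroupType) (G : {set gT}) : Prop :=
  exists A : {group gT}, [/\ A <| G, abelian A & cyclic (G / A)].

(* Main.v *)
Require Import Defs.
From mathcomp Require Import all_boot all_fingroup all_solvable.
Set Implicit Arguments. Unset Strict Implicit. Unset Printing Implicit Defensive.
Local Open Scope group_scope.
Local Open Scope group_scope.
Lemma pnat_leq_dvd p m n : prime p -> p.-nat m -> p.-nat n -> m <= n -> m %| n.
Proof.
move=> pp pm pn le; rewrite -(part_pnat_id pm) -(part_pnat_id pn) !p_part.
apply: dvdn_exp2l; rewrite -(@leq_exp2l p) ?prime_gt1 //.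
by rewrite -!p_part !part_pnat_id.
Qed.

Section Key.
Variable gT : finGroupType.

Lemma comm_morph (A : {group gT}) b : abelian A -> b \in 'N(A) ->
  {in A &, {morph (fun a => [~ a, b]) : x y / x * y}}.
Proof.
move=> abA nAb x y xA yA /=; rewrite commMgJ.
have xbA : [~ x, b] \in A by rewrite groupM ?groupV // memJ_norm.
have /commgP/conjg_fixP -> := centsP abA _ xbA y yA; done.
Qed.

Lemma orbit_step (A B H : {group gT}) p b a :
  prime p -> p.-group H -> A \subset H -> B \subset H -> abelian A -> abelian B ->
  b \in B -> b \in 'N(A) -> a \in A ->
  commute a (b ^+ #|A : A :&: B|).
Proof.
move=> pr pH sAH sBH abA abB bB nAb aA.
set q := #|A : A :&: B|.
pose f := Morphism (comm_morph abA nAb).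
set I := f @* A.
have sDker : A :&: B \subset 'ker f.
  apply/subsetP=> d /setIP [dA dB]; apply/kerP => //=.
  by apply/eqP/commgP; apply: (centsP abB).
have cardI : #|I| <= q.
  rewrite /I card_morphim setIid; apply: dvdn_leq; first exact: indexg_gt0.
  exact: indexgS.
have Iinv : forall c, c \in I -> c ^ b \in I.
  move=> c /morphimP [a' _ a'A ->] /=.
  rewrite conjRg.
  have -> : b ^ b = b by apply/conjg_fixP/commgP.
  have : [~ a' ^ b, b] = f (a' ^ b) by [].
  by move->; apply: mem_morphim; rewrite memJ_norm.
have inI : forall k, [~ a, b ^+ k] \in I.
  elim=> [|k IH]; first by rewrite expg0 commg1 group1.
  rewrite expgSr commgMJ groupM ?Iinv //.
  have -> : [~ a, b] = f a by [].
  exact: mem_morphim.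
set K := <[b]>.
have sub : a ^: K \subset a *: I.
  apply/subsetP=> y /imsetP [z /cycleP [k ->] ->].
  by rewrite mem_lcoset; apply: inI.
have le : #|K : 'C_K[a]| <= q.
  rewrite index_cent1; apply: leq_trans (subset_leq_card sub) _.
  by rewrite card_lcoset.
have pK : p.-group K by apply: pgroupS pH; rewrite cycle_subG (subsetP sBH).
have pq : p.-nat q by apply: pnat_dvd (dvdn_indexg _ _) (pgroupS sAH pH).
have pm : p.-nat #|K : 'C_K[a]| by apply: pnat_dvd (dvdn_indexg _ _) pK.
have mq := pnat_leq_dvd pr pm pq le.
have nCK : K \subset 'N('C_K[a]).
  by apply: normal_norm; rewrite -sub_abelian_normal ?cycle_abelian ?subsetIl.
have bK : b \in K by apply: cycle_id.
have bmC : b ^+ #|K : 'C_K[a]| \in 'C_K[a].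
  apply: coset_idr; first by rewrite groupX // (subsetP nCK).
  rewrite morphX ?(subsetP nCK) //.
  rewrite -card_quotient //; apply: expg_cardG; exact: mem_quotient.
rewrite -(divnK mq) mulnC expgM.
have : (b ^+ #|K : 'C_K[a]|) ^+ (q %/ #|K : 'C_K[a]|) \in 'C_K[a] by rewrite groupX.
by case/subcent1P.
Qed.

Lemma key p (H A B : {group gT}) : prime p -> p.-group H -> A <| H -> abelian A ->
  'C_H(A) \subset A -> cyclic (H / A) -> B \subset H -> abelian B ->
  #|H : A| <= #|H : B|.
Proof.
move=> pr pH nAH abA sCA cycHA sBH abB.
have sAH := normal_sub nAH; have nAH' := normal_norm nAH.
set q := #|A : A :&: B|.
have E : (#|H : A| * q = #|H : B| * #|B : A :&: B|)%N.
  by rewrite /q !Lagrange_index ?subsetIl ?subsetIr.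
suff le : #|B : A :&: B| <= q.
  rewrite -(@leq_pmul2r q) ?indexg_gt0 // E; exact: leq_mul.
have nAB : B \subset 'N(A) := subset_trans sBH nAH'.
rewrite setIC indexgI -card_quotient //.
have /cyclicP [g defg] : cyclic (B / A) by apply: cyclicS cycHA; apply: quotientS.
have : g \in B / A by rewrite defg cycle_id.
case/morphimP=> b nb bB defb.
rewrite defg defb -orderE; apply: dvdn_leq; first exact: indexg_gt0.
rewrite order_dvdn -morphX //; apply/eqP; apply: coset_id.
apply: (subsetP sCA); rewrite inE groupX ?(subsetP sBH) //=.
apply/centP=> a aA.
apply: commute_sym; exact: (orbit_step pr pH sAH sBH abA abB bB nb aA).
Qed.
End Key.
Lemma card_gen_ab (rT : finGroupType) t (Y : {set rT}) :
  abelian <<Y>> -> {in Y, forall y, #[y] <= t} -> #|<<Y>>| <= t ^ #|Y|.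
Proof.
elim: {Y}_.+1 {-2}Y (ltnSn #|Y|) => // n IH Y leY ab ord.
have [-> | ] := eqVneq Y set0.
  by rewrite gen0 cards1 cards0.
case/set0Pn=> y yY.
set Y' := Y :\ y.
have sY' : Y' \subset Y by apply: subsetDl.
have ab' : abelian <<Y'>> by apply: abelianS ab; apply: genS.
have cY : #|Y| = #|Y'|.+1 by rewrite (cardsD1 y Y) yY.
have IH' : #|<<Y'>>| <= t ^ #|Y'|.
  apply: IH => //; first by rewrite -ltnS -cY.
  by move=> z zY; apply: ord; apply: (subsetP sY').
have -> : <<Y>> = <[y]> <*> <<Y'>>.
  by rewrite joing_idr /cycle joing_idl /joing /Y' setD1K.
have sy : <[y]> \subset <<Y>> by rewrite cycle_subG mem_gen.
have sg : <<Y'>> \subset <<Y>> by apply: genS.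
rewrite comm_joingE; last by apply: centC; apply: sub_abelian_cent2 ab sy sg.
rewrite cY expnS.
apply: leq_trans (_ : #|<[y]>| * #|<<Y'>>| <= _)%N; last first.
  by apply: leq_mul => //; rewrite -orderE; apply: ord.
by rewrite mul_cardG leq_pmulr ?cardG_gt0.
Qed.

Theorem lemma3p17 (gT : finGroupType) (p : nat) (P : {group gT}) (r t : nat) :
  prime p -> p.-group P -> metabelian P -> has_rank P r -> 1 <= t ->
  (forall H : {group gT}, H \subset P -> abelian_by_cyclic H ->
     exists B : {group gT}, [/\ B \subset H, abelian B & #|H : B| <= t]) ->
  exists A : {group gT}, [/\ A <| P, abelian A & #|P : A| <= t ^ (2 * r)].
Proof.
move=> pr pP metaP [rk _] t1 hyp.
have h0 : (P^`(1)%G <| P) && abelian P^`(1)%G by rewrite der_normal; exact: metaP.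
have [A maxA sP'A] := @maxgroup_exists _ (fun A : {group gT} => (A <| P) && abelian A) _ h0.
have scn := max_SCN pP maxA.
case/SCN_P: scn => nAP cPA.
have /andP [_ abA] := maxgroupp maxA.
exists A; split => //.
have [X [cX genX]] := rk P (subxx _).
have nAP' := normal_norm nAP.
have sXP : X \subset P by rewrite -genX subset_gen.
have nXA : X \subset 'N(A) := subset_trans sXP nAP'.
rewrite -card_quotient // -genX quotient_gen //.
apply: leq_trans (card_gen_ab (t:=t) _ _) _.
- rewrite -quotient_gen // genX; exact: sub_der1_abelian sP'A.
- move=> y /morphimP [x nx xX ->].
  have xP : x \in P := subsetP sXP x xX.
  have nxA : <[x]> \subset 'N(A) by rewrite cycle_subG.
  rewrite orderE -quotient_cycle // -quotientYidl //.
  set H := (A <*> <[x]>)%G.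
  have sHP : H \subset P by rewrite join_subG (normal_sub nAP) cycle_subG.
  have nAH : A <| H by apply: normalS (joing_subl _ _) sHP nAP.
  have cyc : cyclic (H / A) by rewrite quotientYidl // quotient_cyclic ?cycle_cyclic.
  have abc : abelian_by_cyclic H by exists A.
  have [B [sBH abB iB]] := hyp H sHP abc.
  rewrite card_quotient ?normal_norm //.
  apply: leq_trans iB.
  apply: (key pr (pgroupS sHP pP) nAH abA _ cyc sBH abB).
  by rewrite -{2}cPA setSI.
- rewrite leq_pexp2l //; apply: leq_trans (leq_quotient _ _) _.
  by apply: leq_trans cX _; rewrite mul2n -addnn leq_addr.
Qed.
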